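(* Let $d\ge2$, let $a$ be an i.i.d. conductivity function on $\mathbb{Z}^d$, $\xi\in\mathbb{R}^d$ with $|\xi|=1$, and let $\phi_T$ be the associated approximate corrector, $T>0$. Then for all $n\in2\mathbb{N}$, \[ \big\langle|\phi_T(0)|^n\big(|\nabla\phi_T(0)|^2+|\nabla^*\phi_T(0)|^2\big)\big\rangle\lesssim\langle|\phi_T(0)|^n\rangle, \] where the multiplicative constant depends on $n$, $\alpha$, $\beta$, $d$, but not on $T>0$.
   Context: A conductivity function on $\mathbb{Z}^d$ is $a:\mathbb{Z}^d\times\mathbb{Z}^d\to\mathbb{R}^+$ with $a(x,y)=0$ if $|x-y|\ne1$ and $a(x,y)=a(y,x)\in[\alpha,\beta]$ if $|x-y|=1$, $0<\alpha\le\beta$; i.i.d. means its edge values are independent identically distributed random variables; $\langle\cdot\rangle$ is expectation. With $e_1,\dots,e_d$ the canonical basis: $\nabla u(x)=(u(x+e_i)-u(x))_i$, $\nabla^*u(x)=(u(x)-u(x-e_i))_i$, $\nabla^*\cdot g=\sum_i\nabla_i^*g_i$, $A(x)=\operatorname{diag}(a(x,x+e_1),\dots,a(x,x+e_d))$. The approximate corrector $\phi_T$ is the unique stationary random function with $T^{-1}\phi_T-\nabla^*\cdot A(\nabla\phi_T+\xi)=0$ in $\mathbb{Z}^d$ and $\langle\phi_T\rangle=0$. $X\lesssim Y$ means $X\le CY$ with a constant $C$. *)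

(* Defs.v *)
From HB Require Import structures.
From mathcomp Require Import all_boot all_order all_algebra.
From mathcomp Require Import all_classical all_reals all_analysis.
Set Implicit Arguments. Unset Strict Implicit. Unset Printing Implicit Defensive.
Import Order.TTheory GRing.Theory Num.Theory.
Local Open Scope classical_set_scope.
Local Open Scope ring_scope.

Notation Zd d := 'rV[int]_d.

Definition ebase (d : nat) (i : 'I_d) : Zd d := delta_mx 0 i.

Definition nbr (d : nat) (x y : Zd d) : bool :=
  (\sum_(i < d) ((x - y) 0 i) ^+ 2 == 1)%R.

Section Defs.
Variable R : realType.

Definition conductivity (d : nat) (alpha beta : R) (a : Zd d -> Zd d -> R) : Prop :=
  forall x y : Zd d,
    (~~ nbr x y -> a x y = 0) /\
    (nbr x y -> a x y = a y x /\ alpha <= a x y <= beta).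

Definition grad (d : nat) (u : Zd d -> R) (x : Zd d) (i : 'I_d) : R :=
  u (x + ebase i) - u x.
Definition grad_star (d : nat) (u : Zd d -> R) (x : Zd d) (i : 'I_d) : R :=
  u x - u (x - ebase i).
Definition div_star (d : nat) (g : Zd d -> 'I_d -> R) (x : Zd d) : R :=
  \sum_(i < d) (g x i - g (x - ebase i) i).
(* A(x) = diag(a(x, x+e_1), ..., a(x, x+e_d)) *)
Definition Acoef (d : nat) (a : Zd d -> Zd d -> R) (x : Zd d) (i : 'I_d) : R :=
  a x (x + ebase i).

Definition corrector_eq (d : nat) (a : Zd d -> Zd d -> R) (xi : 'rV[R]_d) (T : R)
  (u : Zd d -> R) : Prop :=
  forall x : Zd d,
    T^-1 * u x
    - div_star (fun y i => Acoef a y i * (grad u y i + xi 0 i)) x = 0.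

Definition sqnorm_grad (d : nat) (u : Zd d -> R) (x : Zd d) : R :=
  \sum_(i < d) (grad u x i) ^+ 2.
Definition sqnorm_grad_star (d : nat) (u : Zd d -> R) (x : Zd d) : R :=
  \sum_(i < d) (grad_star u x i) ^+ 2.

(* The random conductivity field a : Omega -> (Z^d x Z^d -> R) is i.i.d.:
   its edge values a(x, x+e_i) (each undirected edge of Z^d is listed exactly
   once as (x, i)) are measurable, mutually independent (product rule for every
   finite family of distinct edges) and identically distributed. *)
Definition iid_conductivity (dsp : measure_display) (Omega : measurableType dsp)
  (P : probability Omega R) (d : nat) (a : Omega -> Zd d -> Zd d -> R) : Prop :=
  let X := fun (e : Zd d * 'I_d) (w : Omega) => a w e.1 (e.1 + ebase e.2) in
  (forall e, measurable_fun setT (X e)) /\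
  (forall (s : seq (Zd d * 'I_d)) (B : Zd d * 'I_d -> set R),
      uniq s -> (forall e, measurable (B e)) ->
      fine (P (\big[setI/setT]_(e <- s) (X e @^-1` B e)))
      = \prod_(e <- s) fine (P (X e @^-1` B e))) /\
  (forall (e e' : Zd d * 'I_d) (B : set R), measurable B ->
      P (X e @^-1` B) = P (X e' @^-1` B)).

(* phi is a stationary random function (jointly with a): there is a
   measure-preserving action of the shifts of Z^d on Omega that is
   covariant for both a and phi. *)
Definition stationary (dsp : measure_display) (Omega : measurableType dsp)
  (P : probability Omega R) (d : nat) (a : Omega -> Zd d -> Zd d -> R)
  (phi : Omega -> Zd d -> R) : Prop :=
  exists tau : Zd d -> Omega -> Omega,
    (forall z, measurable_fun setT (tau z)) /\
    (forall z (A : set Omega), measurable A -> P (tau z @^-1` A) = P A) /\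
    (forall z w x y, a (tau z w) x y = a w (x + z) (y + z)) /\
    (forall z w x, phi (tau z w) x = phi w (x + z)).

Definition approx_corrector (dsp : measure_display) (Omega : measurableType dsp)
  (P : probability Omega R) (d : nat) (a : Omega -> Zd d -> Zd d -> R)
  (xi : 'rV[R]_d) (T : R) (phi : Omega -> Zd d -> R) : Prop :=
  (forall x, measurable_fun setT (fun w => phi w x)) /\
  stationary P a phi /\
  (forall w, corrector_eq (a w) xi T (phi w)) /\
  P.-integrable setT (fun w => (phi w 0)%:E) /\
  (\int[P]_w (phi w 0)%:E = 0)%E.

End Defs.

(* Main.v *)
Require Import Defs.
From HB Require Import structures.
From mathcomp Require Import all_boot all_order all_algebra.
From mathcomp Require Import all_classical all_reals all_analysis.
From mathcomp Require Import measurable_realfun lebesgue_integral.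
From mathcomp Require Import ring lra.
Import Order.TTheory GRing.Theory Num.Theory.
Local Open Scope ring_scope.

Section alg.
Context {R : realType}.
Implicit Types (x y u v M : R).

Definition clamp M x : R := Num.max (- M) (Num.min x M).

Lemma clampE M x : 0 <= M ->
  clamp M x = if x < - M then - M else if M < x then M else x.
Proof.
move=> M0; rewrite /clamp.
case: ifPn => h1.
  have -> : Num.min x M = x by apply/min_idPl; lra.
  by apply/max_idPl; lra.
case: ifPn => h2.
  have -> : Num.min x M = M by apply/min_idPr; lra.
  by apply/max_idPr; lra.
have -> : Num.min x M = x by apply/min_idPl; lra.
by apply/max_idPr; lra.
Qed.

Ltac clcase := rewrite ?clampE //; repeat (case: ifPn => [?|]; last rewrite -leNgt => ?).

Lemma clamp_bound M x : 0 <= M -> `|clamp M x| <= M.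
Proof. move=> M0; clcase; rewrite ler_norml; lra. Qed.

Lemma clamp_norm M x : 0 <= M -> `|clamp M x| <= `|x|.
Proof.
have hx1 := ler_norm x; have hx2 : -x <= `|x| by rewrite -normrN ler_norm.
move=> M0; rewrite ler_norml; clcase; lra.
Qed.

Lemma clamp_sign M x : 0 <= M -> 0 <= x * clamp M x.
Proof. move=> M0; clcase; nra. Qed.

Lemma clamp_id M x : `|x| <= M -> clamp M x = x.
Proof.
move=> h; have M0 : 0 <= M by apply: le_trans h.
move: h; rewrite ler_norml => /andP[h1 h2]; clcase; lra.
Qed.

Lemma clamp_lip M x y : 0 <= M ->
  (clamp M y - clamp M x) ^+ 2 <= (clamp M y - clamp M x) * (y - x).
Proof. move=> M0; rewrite expr2; clcase; nra. Qed.

Lemma clamp_lipn M x y : 0 <= M ->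
  `|clamp M y - clamp M x| <= `|y - x|.
Proof.
move=> M0; rewrite -ler_sqr ?normr_ge0 // !real_normK ?num_real //.
have := clamp_lip M x y M0.
have := sqr_ge0 ((y - x) - (clamp M y - clamp M x)).
rewrite !expr2; nra.
Qed.

Lemma clamp_comp M M' x : 0 <= M -> M <= M' -> clamp M (clamp M' x) = clamp M x.
Proof.
move=> M0 MM; rewrite [clamp M' x](clampE _ _ (le_trans M0 MM)).
repeat (case: ifPn => [?|]; last rewrite -leNgt => ?); rewrite !(clampE _ _ M0);
  repeat (case: ifPn => [?|]; last rewrite -leNgt => ?); lra.
Qed.

Lemma even_ge0 j x : 0 <= x ^+ (2 * j).
Proof. by rewrite exprM exprn_ge0 // sqr_ge0. Qed.

Lemma even_norm j x : `|x| ^+ (2 * j) = x ^+ (2 * j).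
Proof. by rewrite -normrX ger0_norm // even_ge0. Qed.

Lemma even_mono j x y : x ^+ 2 <= y ^+ 2 -> x ^+ (2 * j) <= y ^+ (2 * j).
Proof. by move=> h; rewrite !exprM; apply: lerXn2r => //; rewrite nnegrE sqr_ge0. Qed.

Lemma key_lower j u v :
  (u ^+ (2 * j) + v ^+ (2 * j)) * (v - u) ^+ 2
    <= 2 * ((v ^+ (2 * j).+1 - u ^+ (2 * j).+1) * (v - u)).
Proof.
set n := (2 * j)%N.
have id : 2 * ((v ^+ n.+1 - u ^+ n.+1) * (v - u))
   - (u ^+ n + v ^+ n) * (v - u) ^+ 2 = (v ^+ 2 - u ^+ 2) * (v ^+ n - u ^+ n).
  rewrite !exprS; ring.
rewrite -subr_ge0 id.
case: (lerP (u ^+ 2) (v ^+ 2)) => h.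
  by apply: mulr_ge0; rewrite subr_ge0 //; apply: even_mono.
apply: mulr_le0; rewrite subr_le0 //; [exact: ltW|apply: even_mono; exact: ltW].
Qed.

Lemma pow_mix j i x y : 0 <= x -> 0 <= y -> (i <= j)%N ->
  x ^+ (j - i) * y ^+ i <= x ^+ j + y ^+ j.
Proof.
move=> x0 y0 ij.
case: (lerP x y) => h.
  apply: (@le_trans _ _ (y ^+ j)); last by rewrite lerDr exprn_ge0.
  rewrite -{2}(subnK ij) exprD; apply: ler_wpM2r; first exact: exprn_ge0.
  by apply: lerXn2r.
apply: (@le_trans _ _ (x ^+ j)); last by rewrite lerDl exprn_ge0.
rewrite -{2}(subnK ij) exprD; apply: ler_wpM2l; first exact: exprn_ge0.
by apply: lerXn2r; rewrite ?nnegrE // ltW.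
Qed.

Lemma key_lip n u v :
  `|v ^+ n.+1 - u ^+ n.+1| <= (n.+1)%:R * (`|u| ^+ n + `|v| ^+ n) * `|v - u|.
Proof.
rewrite subrXX normrM mulrC; apply: ler_wpM2r; first exact: normr_ge0.
apply: le_trans (ler_norm_sum _ _ _) _.
apply: (@le_trans _ _ (\sum_(i < n.+1) (`|u| ^+ n + `|v| ^+ n))).
  apply: ler_sum => i _; rewrite normrM !normrX /= addrC.
  by apply: pow_mix => //; rewrite -ltnS.
by rewrite sumr_const card_ord mulr_natl.
Qed.
Lemma amgm x y z : 0 <= y -> 0 <= z -> x ^+ 2 <= y * z -> 2 * x <= y + z.
Proof.
move=> y0 z0 h; have := sqr_ge0 (y - z); rewrite !expr2 in h *.
case: (lerP x 0) => hx; first nra.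
nra.
Qed.

Lemma pointwise j al be M a0 b A X : 0 < al -> 0 < M -> al <= A -> A <= be ->
  `|X| <= 1 ->
  al * ((clamp M a0 ^+ (2 * j) + clamp M b ^+ (2 * j))
        * (clamp M b - clamp M a0) ^+ 2)
   <= 4 * ((clamp M b ^+ (2 * j).+1 - clamp M a0 ^+ (2 * j).+1)
           * (A * (b - a0 + X)))
      + 2 * be * ((2 * j).+1%:R * (`|a0| ^+ (2 * j) + `|b| ^+ (2 * j))).
Proof.
move=> al0 M0 alA Abe X1.
have M0' : 0 <= M by exact: ltW.
have hc := clamp_lip M a0 b M0'.
have hn := key_lip (2 * j) (clamp M a0) (clamp M b).
have h1 := key_lower j (clamp M a0) (clamp M b).
have ea := clamp_norm M a0 M0'.
have eb := clamp_norm M b M0'.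
have na : `|clamp M a0| ^+ (2 * j) <= `|a0| ^+ (2 * j).
  by apply: lerXn2r; rewrite ?nnegrE.
have nb : `|clamp M b| ^+ (2 * j) <= `|b| ^+ (2 * j).
  by apply: lerXn2r; rewrite ?nnegrE.
have ga := even_ge0 j (clamp M a0).
have gb := even_ge0 j (clamp M b).
have gna := even_ge0 j a0.
have gnb := even_ge0 j b.
rewrite !even_norm in na nb hn *.
move: hc hn h1 na nb ga gb gna gnb.
set n := (2 * j)%N.
set ca := clamp M a0; set cb := clamp M b.
set U := ca ^+ n; set V := cb ^+ n; set Ua := a0 ^+ n; set Vb := b ^+ n.
set dp := cb ^+ n.+1 - ca ^+ n.+1.
set m := n.+1%:R.
have m0 : 0 <= m by [].
move=> hc hn h1 na nb ga gb gna gnb.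
set dc := cb - ca in hc hn h1 *.
set dl := b - a0 in hc *.
set L := m * (Ua + Vb).
have L0 : 0 <= L by apply: mulr_ge0 => //; lra.
have hW0 : 0 <= (U + V) * dc ^+ 2 by apply: mulr_ge0; [lra|exact: sqr_ge0].
have h0 : 0 <= dp * dc by lra.
have h2 : dp * dc <= dp * dl.
  have [dc0|dcn0] := eqVneq dc 0.
    have -> : dp = 0.
      by rewrite /dp; move/eqP: dc0; rewrite /dc subr_eq0 => /eqP ->; rewrite subrr.
    by rewrite !mul0r.
  have hh : 0 <= dp * (dl - dc) * dc ^+ 2.
    have -> : dp * (dl - dc) * dc ^+ 2 = (dp * dc) * (dc * dl - dc ^+ 2) by ring.
    by apply: mulr_ge0 => //; lra.
  have : 0 <= dp * (dl - dc).
    by move: hh; rewrite pmulr_lge0 // exprn_even_gt0 //.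
  rewrite mulrBr; lra.
have h3 : `|dp| <= L * `|dc|.
  apply: le_trans hn _; apply: ler_wpM2r; first exact: normr_ge0.
  by apply: ler_wpM2l => //; lra.
have h4 : dp ^+ 2 <= L * (dp * dl).
  have -> : dp ^+ 2 = `|dp| * `|dp| by rewrite -expr2 real_normK ?num_real.
  apply: (@le_trans _ _ (`|dp| * (L * `|dc|))).
    by apply: ler_wpM2l => //; exact: normr_ge0.
  rewrite mulrCA -normrM ger0_norm //; apply: ler_wpM2l => //.
have A0 : 0 <= A by lra.
set G := A * (dp * dl).
have G0 : 0 <= G by apply: mulr_ge0 => //; lra.
have h5 : 2 * (A * `|dp|) <= G + A * L.
  apply: amgm => //; first exact: mulr_ge0.
  rewrite exprMn real_normK ?num_real //.
  have -> : G * (A * L) = A ^+ 2 * (L * (dp * dl)) by rewrite /G; ring.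
  by apply: ler_wpM2l => //; exact: sqr_ge0.
have h6 : - (A * `|dp|) <= A * (dp * X).
  have hx : - `|dp| <= dp * X.
    have : `|dp * X| <= `|dp| by rewrite normrM ler_piMr ?normr_ge0.
    rewrite ler_norml => /andP[+ _]; lra.
  by have := ler_wpM2l A0 hx; rewrite mulrN.
have h7 : al * (dp * dc) <= A * (dp * dc) by apply: ler_wpM2r.
have h8 : A * (dp * dc) <= G by apply: ler_wpM2l.
have h9 : A * L <= be * L by apply: ler_wpM2r.
have -> : dp * (A * (dl + X)) = G + A * (dp * X) by rewrite /G; ring.
have : al * ((U + V) * dc ^+ 2) <= al * (2 * (dp * dc)) by apply: ler_wpM2l => //; lra.
move: h5 h6 h7 h8 h9; clearbody L G dp dc dl U V; move=> h5 h6 h7 h8 h9 h10. rewrite (_ : al * (2 * (dp * dc)) = 2 * (al * (dp * dc))) in h10; last by ring.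
move: h5 h6 h7 h8 h9 h10; rewrite -mulrA.
generalize (al * (dp * dc)) (A * (dp * dc)) (A * `|dp|) (A * (dp * X)) (A * L) (be * L) (al * ((U + V) * dc ^+ 2)).
move=> t1 t2 t3 t4 t5 t6 t7.
lra.
Qed.
Definition Wf j M a0 b : R :=
  (clamp M a0 ^+ (2 * j) + clamp M b ^+ (2 * j)) * (clamp M b - clamp M a0) ^+ 2.

Lemma Wf_ge0 j M a0 b : 0 <= Wf j M a0 b.
Proof. by apply: mulr_ge0; [apply: addr_ge0; exact: even_ge0|exact: sqr_ge0]. Qed.

Lemma Wf_mono j M M' a0 b : 0 <= M -> M <= M' -> Wf j M a0 b <= Wf j M' a0 b.
Proof.
move=> M0 MM; rewrite /Wf -(clamp_comp M M' a0 M0 MM) -(clamp_comp M M' b M0 MM).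
generalize (clamp M' a0) (clamp M' b) => x y.
have h x0 : clamp M x0 ^+ (2 * j) <= x0 ^+ (2 * j).
  rewrite -(even_norm j (clamp M x0)) -(even_norm j x0).
  by apply: lerXn2r; rewrite ?nnegrE ?normr_ge0 //; exact: clamp_norm.
apply: ler_pM.
- by apply: addr_ge0; exact: even_ge0.
- exact: sqr_ge0.
- by apply: lerD; apply: h.
have hl := clamp_lipn M x y M0.
rewrite -(real_normK (num_real (clamp M y - clamp M x))) -(real_normK (num_real (y - x))).
by apply: lerXn2r; rewrite ?nnegrE ?normr_ge0.
Qed.

Lemma Wf_lim j M a0 b : `|a0| <= M -> `|b| <= M ->
  Wf j M a0 b = (a0 ^+ (2 * j) + b ^+ (2 * j)) * (b - a0) ^+ 2.
Proof. by move=> ha hb; rewrite /Wf !clamp_id. Qed.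
End alg.

Local Open Scope classical_set_scope.

Section shift.
Context (R : realType) (dsp : measure_display) (Omega : measurableType dsp)
  (P : probability Omega R) (t : Omega -> Omega)
  (mt : measurable_fun setT t)
  (pt : forall A, measurable A -> P (t @^-1` A) = P A).
Local Open Scope ereal_scope.

Lemma shift_ge0 (f : Omega -> \bar R) : measurable_fun setT f ->
  (forall x, 0 <= f x) -> \int[P]_x f (t x) = \int[P]_x f x.
Proof.
move=> mf f0.
have := ge0_integral_pushforward mt P measurableT mf
  (fun y _ => f0 y).
rewrite preimage_setT => <-.
apply: eq_measure_integral => A mA _ /=.
by rewrite /pushforward pt.
Qed.

Lemma shift_int (f : Omega -> \bar R) : measurable_fun setT f ->
  \int[P]_x f (t x) = \int[P]_x f x.
Proof.
move=> mf; rewrite integralE [RHS]integralE.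
congr (_ - _).
  have := @shift_ge0 (f^\+) (measurable_funepos mf) (funepos_ge0 f).
  by rewrite -/(_ \o _) -funepos_comp.
have := @shift_ge0 (f^\-) (measurable_funeneg mf) (funeneg_ge0 f).
by rewrite -/(_ \o _) -funeneg_comp.
Qed.
Lemma shift_integrable (f : Omega -> \bar R) :
  P.-integrable setT f -> P.-integrable setT (f \o t).
Proof.
move=> /integrableP[mf fi]; apply/integrableP; split.
  exact: measurableT_comp.
rewrite (@shift_ge0 (fun x => `|f x|)) //.
exact: measurableT_comp.
Qed.
End shift.

Section hlp.
Context {R : realType} {dT : measure_display} {Tm : measurableType dT}
  (mu : {measure set Tm -> \bar R}).
Local Notation int f := (mu.-integrable setT (fun w => (f w)%:E)).

Lemma intD (f g : Tm -> R) : int f -> int g -> int (fun w => f w + g w).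
Proof. by move=> hf hg; have := integrableD measurableT hf hg. Qed.

Lemma intB (f g : Tm -> R) : int f -> int g -> int (fun w => f w - g w).
Proof. by move=> hf hg; have := integrableB measurableT hf hg. Qed.

Lemma intZ (c : R) (f : Tm -> R) : int f -> int (fun w => c * f w).
Proof. by move=> hf; have := integrableZl measurableT c hf. Qed.

Lemma intS (I : eqType) (s : seq I) (f : I -> Tm -> R) : (forall i, int (f i)) ->
  int (fun w => \sum_(i <- s) f i w).
Proof.
move=> hf; have := @integrable_sum _ _ _ mu setT measurableT I s xpredT
  (fun i w => (f i w)%:E) (fun i _ => hf i).
by apply: eq_integrable => // w _; rewrite sumEFin.
Qed.

Lemma intN (f : Tm -> R) : int f -> int (fun w => `|f w|).
Proof. by move=> hf; have := integrable_norm hf. Qed.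

Lemma intle (f g : Tm -> R) : measurable_fun setT f -> (forall w, `|f w| <= `|g w|) ->
  int g -> int f.
Proof.
move=> mf fg hg; apply: le_integrable hg => //.
  exact/measurable_EFinP.
by move=> w _ /=; rewrite lee_fin.
Qed.

Local Open Scope ereal_scope.
Lemma igD (f g : Tm -> R) : int f -> int g ->
  \int[mu]_w (f w + g w)%:E = \int[mu]_w (f w)%:E + \int[mu]_w (g w)%:E.
Proof. by move=> hf hg; rewrite -integralD. Qed.

Lemma igB (f g : Tm -> R) : int f -> int g ->
  \int[mu]_w (f w - g w)%:E = \int[mu]_w (f w)%:E - \int[mu]_w (g w)%:E.
Proof. by move=> hf hg; rewrite -integralB. Qed.

Lemma igZ (c : R) (f : Tm -> R) : int f ->
  \int[mu]_w (c * f w)%:E = c%:E * \int[mu]_w (f w)%:E.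
Proof. by move=> hf; rewrite -integralZl. Qed.

Lemma igS (I : eqType) (s : seq I) (f : I -> Tm -> R) : (forall i, int (f i)) ->
  \int[mu]_w (\sum_(i <- s) f i w)%:E = \sum_(i <- s) \int[mu]_w (f i w)%:E.
Proof.
move=> hf; rewrite -(integral_sum measurableT (f:=fun i w => (f i w)%:E)) //.
by apply: eq_integral => w _; rewrite sumEFin.
Qed.

Lemma geD (f g : Tm -> R) : measurable_fun setT f -> measurable_fun setT g ->
  (forall w, (0 <= f w)%R) -> (forall w, (0 <= g w)%R) ->
  \int[mu]_w (f w + g w)%:E = \int[mu]_w (f w)%:E + \int[mu]_w (g w)%:E.
Proof.
move=> mf mg f0 g0; rewrite -ge0_integralD //.
- by move=> w _; rewrite lee_fin.
- exact/measurable_EFinP.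
- by move=> w _; rewrite lee_fin.
- exact/measurable_EFinP.
Qed.

Lemma geS (I : eqType) (s : seq I) (f : I -> Tm -> R) :
  (forall i, measurable_fun setT (f i)) -> (forall i w, (0 <= f i w)%R) ->
  \int[mu]_w (\sum_(i <- s) f i w)%:E = \sum_(i <- s) \int[mu]_w (f i w)%:E.
Proof.
move=> mf f0; rewrite -(@ge0_integral_sum _ _ _ mu setT measurableT I (fun i w => (f i w)%:E)).
- by apply: eq_integral => w _; rewrite sumEFin.
- by move=> i; exact/measurable_EFinP.
- by move=> i w _; rewrite lee_fin.
Qed.
End hlp.

Lemma nbr_e d (i : 'I_d) : nbr (0 : Zd d) (0 + ebase i).
Proof.
rewrite /nbr add0r (bigD1 i) //= big1 => [|j ji].
  by rewrite /ebase !mxE /= eqxx add0r sqrrN expr1n addr0.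
rewrite /ebase !mxE /=; case: eqP => [jie|_]; [by rewrite jie eqxx in ji|by rewrite add0r oppr0 expr0n].
Qed.

Lemma xi_bound (R : realType) d (xi : 'rV[R]_d) (i : 'I_d) :
  \sum_(i < d) (xi 0 i) ^+ 2 = 1 -> `|xi 0 i| <= 1.
Proof.
move=> h; rewrite -(expr_le1 (n:=2)) ?normr_ge0 // real_normK ?num_real //.
rewrite -h (bigD1 i) //= lerDl; apply: sumr_ge0 => j _; exact: sqr_ge0.
Qed.

Section main.
Context (R : realType) (d k : nat) (alpha beta : R) (halpha : 0 < alpha)
  (hab : alpha <= beta)
  (dsp : measure_display) (Omega : measurableType dsp) (P : probability Omega R)
  (a : Omega -> Zd d -> Zd d -> R) (xi : 'rV[R]_d) (T : R)
  (phi : Omega -> Zd d -> R)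
  (hcond : forall w, conductivity alpha beta (a w))
  (ma : forall x i, measurable_fun setT (fun w => a w x (x + ebase i)))
  (hxi : \sum_(i < d) (xi 0 i) ^+ 2 = 1) (hT : 0 < T)
  (mphi : forall x, measurable_fun setT (fun w => phi w x))
  (tau : Zd d -> Omega -> Omega) (mtau : forall z, measurable_fun setT (tau z))
  (ptau : forall z (A : set Omega), measurable A -> P (tau z @^-1` A) = P A)
  (atau : forall z w x y, a (tau z w) x y = a w (x + z) (y + z))
  (phitau : forall z w x, phi (tau z w) x = phi w (x + z))
  (heq : forall w, corrector_eq (a w) xi T (phi w))
  (iphi : P.-integrable setT (fun w => (phi w 0)%:E)).

Local Notation n := (2 * k.+1)%N.
Definition p0 w := phi w 0.
Definition pe (i : 'I_d) w := phi w (0 + ebase i).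
Definition Aa (i : 'I_d) w := a w 0 (0 + ebase i).

Lemma m_p0 : measurable_fun setT p0. Proof. exact: mphi. Qed.
Lemma m_pe i : measurable_fun setT (pe i). Proof. exact: mphi. Qed.
Lemma m_Aa i : measurable_fun setT (Aa i). Proof. exact: (ma 0 i). Qed.

Lemma Aa_bound i w : alpha <= Aa i w <= beta.
Proof. by have [_ /(_ (@nbr_e _ i)) [_ ->]] := hcond w 0 (0 + ebase i). Qed.

Lemma pe_tau i w : pe i w = p0 (tau (ebase i) w).
Proof. by rewrite /pe /p0 phitau add0r. Qed.

Lemma int_p0 : P.-integrable setT (EFin \o p0). Proof. exact: iphi. Qed.

Lemma int_pe i : P.-integrable setT (EFin \o pe i).
Proof.
have -> : EFin \o pe i = (EFin \o p0) \o tau (ebase i).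
  by apply/funext => w /=; rewrite pe_tau.
apply: (@shift_integrable _ _ _ P (tau (ebase i)) (mtau _) (ptau _)); exact: int_p0.
Qed.

Definition psi (M x : R) := clamp M x ^+ n.+1.
Definition J (i : 'I_d) w := Aa i w * (pe i w - p0 w + xi 0 i).
Definition ti (i : 'I_d) := tau (- ebase i).
Definition hh M i w := psi M (pe i w) * J i w.

Lemma pe_ti i w : pe i (ti i w) = p0 w.
Proof. by rewrite /pe /ti /p0 phitau addrK. Qed.

Lemma J_ti i w : J i (ti i w) =
  Acoef (a w) (0 - ebase i) i * (grad (phi w) (0 - ebase i) i + xi 0 i).
Proof.
rewrite /J /Aa /pe /p0 /ti atau !phitau /Acoef /grad.
by have -> : (0 + ebase i + - ebase i) = (0 - ebase i + ebase i :> Zd d)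
  by rewrite addrK subrK.
Qed.

Lemma eq_at0 w : T^-1 * p0 w = \sum_(i < d) (J i w - J i (ti i w)).
Proof.
have := heq w 0; rewrite /div_star => /eqP; rewrite subr_eq0 => /eqP ->.
by apply: eq_bigr => i _; rewrite J_ti.
Qed.

Lemma psi_sign M x : 0 <= M -> 0 <= x * psi M x.
Proof.
move=> M0; rewrite /psi exprS mulrA; apply: mulr_ge0; first exact: clamp_sign.
exact: even_ge0.
Qed.

Lemma sumF_le M w : 0 <= M ->
  \sum_(i < d) (psi M (pe i w) - psi M (p0 w)) * J i w
  <= \sum_(i < d) (hh M i w - hh M i (ti i w)).
Proof.
move=> M0.
have e : \sum_(i < d) (psi M (pe i w) - psi M (p0 w)) * J i w =
   \sum_(i < d) (hh M i w - hh M i (ti i w)) - T^-1 * (p0 w * psi M (p0 w)).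
  rewrite /hh.
  under [in RHS]eq_bigr do rewrite pe_ti.
  rewrite (_ : T^-1 * (p0 w * psi M (p0 w)) = psi M (p0 w) * (T^-1 * p0 w));
    last by ring.
  rewrite eq_at0 mulr_sumr -sumrB; apply: eq_bigr => i _; ring.
rewrite e lerBlDr lerDl; apply: mulr_ge0; first by rewrite invr_ge0 ltW.
exact: psi_sign.
Qed.

Definition Wt M w := \sum_(i < d) Wf k.+1 M (p0 w) (pe i w).
Definition Lw w := \sum_(i < d) (n.+1%:R * (`|p0 w| ^+ n + `|pe i w| ^+ n)).
Definition Hw M w := \sum_(i < d) (hh M i w - hh M i (ti i w)).

Lemma pw_total M w : 0 < M -> alpha * Wt M w <= 4 * Hw M w + 2 * beta * Lw w.
Proof.
move=> M0; rewrite /Wt mulr_sumr.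
apply: (@le_trans _ _ (\sum_(i < d) (4 * ((psi M (pe i w) - psi M (p0 w)) * J i w)
    + 2 * beta * (n.+1%:R * (`|p0 w| ^+ n + `|pe i w| ^+ n))))).
  apply: ler_sum => i _; have /andP[h1 h2] := Aa_bound i w.
  exact: (@pointwise R k.+1 alpha beta M (p0 w) (pe i w) (Aa i w) (xi 0 i) halpha M0 h1 h2 (@xi_bound R d xi i hxi)).
rewrite big_split /= -!mulr_sumr; apply: lerD.
  by apply: ler_wpM2l => //; apply: sumF_le; exact: ltW.
by rewrite /Lw -mulr_sumr.
Qed.

Lemma m_clampf M (f : Omega -> R) : measurable_fun setT f ->
  measurable_fun setT (fun w => clamp M (f w)).
Proof.
move=> mf; apply: measurable_maxr; first exact: measurable_cst.
by apply: measurable_minr => //; exact: measurable_cst.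
Qed.

Lemma m_norm (f : Omega -> R) : measurable_fun setT f ->
  measurable_fun setT (fun w => `|f w|).
Proof. by move=> mf; apply: measurableT_comp => //; exact: normr_measurable. Qed.

Ltac mfun := repeat first
  [ apply: measurable_funX | apply: measurable_funD | apply: measurable_funB
  | apply: measurable_funN | apply: measurable_funM | apply: m_clampf
  | apply: measurable_sum => ?
  | apply: m_norm
  | apply: measurable_cst | apply: m_p0 | apply: m_pe | apply: m_Aa ].

Lemma m_hh M i : measurable_fun setT (hh M i).
Proof. rewrite /hh /psi /J; mfun. Qed.

Lemma m_hhti M i : measurable_fun setT (fun w => hh M i (ti i w)).
Proof. apply: measurableT_comp; [exact: m_hh|exact: mtau]. Qed.

Lemma shiftP (z : Zd d) (f : Omega -> \bar R) : measurable_fun setT f ->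
  (\int[P]_w f (tau z w) = \int[P]_w f w)%E.
Proof. by move=> mf; exact: (@shift_int _ _ _ P (tau z) (mtau z) (ptau z) f mf). Qed.

Lemma shiftI (z : Zd d) (f : Omega -> R) :
  P.-integrable setT (fun w => (f w)%:E) ->
  P.-integrable setT (fun w => (f (tau z w))%:E).
Proof.
move=> hf; have := @shift_integrable _ _ _ P (tau z) (mtau _) (ptau _) _ hf.
by [].
Qed.

Lemma i_cst (c : R) : P.-integrable setT (fun w : Omega => c%:E).
Proof. have := @finite_measure_integrable_cst _ _ _ P setT c measurableT. by []. Qed.

Lemma i_pe0 i : P.-integrable setT (fun w => (pe i w)%:E).
Proof. exact: int_pe. Qed.

Lemma i_hh M i : 0 <= M -> P.-integrable setT (fun w => (hh M i w)%:E).
Proof.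
move=> M0.
apply: (@intle _ _ _ P _ (fun w => M ^+ n.+1 * beta * (`|pe i w| + `|p0 w| + 1))).
- exact: m_hh.
- move=> w; rewrite [X in _ <= X]ger0_norm; last first.
    apply: mulr_ge0; last by apply: addr_ge0 => //; apply: addr_ge0.
    apply: mulr_ge0; [exact: exprn_ge0|].
    by have /andP[h1 h2] := Aa_bound i w; apply: le_trans h2; apply: le_trans h1; exact: ltW.
  rewrite /hh /J normrM -mulrA; apply: ler_pM; rewrite ?normr_ge0 //.
    by rewrite /psi normrX; apply: lerXn2r; rewrite ?nnegrE ?normr_ge0 ?clamp_bound.
  rewrite normrM; apply: ler_pM; rewrite ?normr_ge0 //.
    by have /andP[h1 h2] := Aa_bound i w; rewrite ger0_norm //; apply: le_trans h1; exact: ltW.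
  apply: le_trans (ler_normD _ _) _; apply: lerD; last exact: (@xi_bound R d xi i hxi).
  by apply: le_trans (ler_normB _ _) _.
apply: intZ; apply: intD; last exact: i_cst.
by apply: intD; apply: intN; [exact: i_pe0|exact: int_p0].
Qed.

Lemma i_hhti M i : 0 <= M -> P.-integrable setT (fun w => (hh M i (ti i w))%:E).
Proof. by move=> M0; apply: shiftI; exact: i_hh. Qed.

Lemma ig_Hw M : 0 <= M -> (\int[P]_w (Hw M w)%:E = 0)%E.
Proof.
move=> M0; rewrite /Hw igS; last by move=> i; apply: intB; [exact: i_hh|exact: i_hhti].
rewrite big1 // => i _; rewrite igB; [|exact: i_hh|exact: i_hhti].
rewrite (@shiftP (- ebase i) (fun w => (hh M i w)%:E)); last exact/measurable_EFinP/m_hh.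
rewrite subee //; apply: integrable_fin_num => //; exact: i_hh.
Qed.

Definition Cst := alpha^-1 * (2 * beta * (d%:R * (n.+1%:R * 2))).

Lemma m_Wt M : measurable_fun setT (Wt M).
Proof. rewrite /Wt /Wf; mfun. Qed.
Lemma m_Lw : measurable_fun setT Lw.
Proof. rewrite /Lw; mfun. Qed.
Lemma m_Hw M : measurable_fun setT (Hw M).
Proof. rewrite /Hw; apply: measurable_sum => i; apply: measurable_funB; [exact: m_hh|exact: m_hhti]. Qed.

Lemma i_Hw M : 0 <= M -> P.-integrable setT (fun w => (Hw M w)%:E).
Proof. by move=> M0; apply: intS => i; apply: intB; [exact: i_hh|exact: i_hhti]. Qed.

Lemma Wt_ge0 M w : 0 <= Wt M w.
Proof. by apply: sumr_ge0 => i _; exact: Wf_ge0. Qed.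

Definition Wlim w := \sum_(i < d) (p0 w ^+ n + pe i w ^+ n) * (pe i w - p0 w) ^+ 2.

Lemma Wt_nd w : nondecreasing_seq (fun N : nat => (Wt N.+1%:R w)%:E).
Proof.
move=> N1 N2 hN; rewrite lee_fin; apply: ler_sum => i _.
apply: Wf_mono; first by [].
by rewrite ler_nat.
Qed.

Lemma Wt_cvg w : (fun N : nat => (Wt N.+1%:R w)%:E) @ \oo --> (Wlim w)%:E.
Proof.
apply: cvg_near_cst.
set B := `|p0 w| + \sum_(i < d) `|pe i w|.
have hB : 0 <= B by apply: addr_ge0 => //; apply: sumr_ge0.
exists (Num.truncn B) => // N /= hN.
have BN : B <= N.+1%:R.
  apply: ltW; apply: lt_le_trans (truncnS_gt B) _; by rewrite ler_nat.
have h0 : `|p0 w| <= N.+1%:R.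
  apply: le_trans BN; rewrite lerDl; exact: sumr_ge0.
congr EFin; apply: eq_bigr => i _; apply: Wf_lim => //.
apply: le_trans BN; apply: (@le_trans _ _ (\sum_(j < d) `|pe j w|)).
  by rewrite (bigD1 i) //= ?lerDl ?lerDr sumr_ge0.
by rewrite /B ?lerDl ?lerDr.
Qed.

Definition uu i w := `|p0 w| ^+ n * (pe i w - p0 w) ^+ 2.
Definition vv i w := `|p0 w| ^+ n * (grad_star (phi w) 0 i) ^+ 2.
Definition vv' i w := `|pe i w| ^+ n * (pe i w - p0 w) ^+ 2.

Lemma m_uu i : measurable_fun setT (uu i). Proof. rewrite /uu; mfun. Qed.
Lemma m_vv' i : measurable_fun setT (vv' i). Proof. rewrite /vv'; mfun. Qed.
Lemma m_vv i : measurable_fun setT (vv i).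
Proof. rewrite /vv /grad_star; mfun; exact: mphi. Qed.
Lemma uu_ge0 i w : 0 <= uu i w.
Proof. by apply: mulr_ge0; [exact: exprn_ge0|exact: sqr_ge0]. Qed.
Lemma vv_ge0 i w : 0 <= vv i w.
Proof. by apply: mulr_ge0; [exact: exprn_ge0|exact: sqr_ge0]. Qed.
Lemma vv'_ge0 i w : 0 <= vv' i w.
Proof. by apply: mulr_ge0; [exact: exprn_ge0|exact: sqr_ge0]. Qed.

Lemma vv_ti i w : vv i w = vv' i (ti i w).
Proof. by rewrite /vv /vv' pe_ti /p0 /ti phitau /grad_star add0r. Qed.

Lemma LHS_eq :
  (\int[P]_w ((`|phi w 0| ^+ n
          * (sqnorm_grad (phi w) 0 + sqnorm_grad_star (phi w) 0))%:E)
   = \int[P]_w (Wlim w)%:E)%E.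
Proof.
transitivity (\int[P]_w (\sum_(i < d) uu i w + \sum_(i < d) vv i w)%:E)%E.
  apply: eq_integral => w _; congr EFin.
  by rewrite mulrDr !mulr_sumr.
rewrite geD; last 4 first.
- by apply: measurable_sum => i; exact: m_uu.
- by apply: measurable_sum => i; exact: m_vv.
- by move=> w; apply: sumr_ge0 => i _; exact: uu_ge0.
- by move=> w; apply: sumr_ge0 => i _; exact: vv_ge0.
rewrite geS; [|exact: m_uu|exact: uu_ge0].
rewrite geS; [|exact: m_vv|exact: vv_ge0].
transitivity (\int[P]_w (\sum_(i < d) (uu i w + vv' i w))%:E)%E; last first.
  apply: eq_integral => w _; congr EFin; apply: eq_bigr => i _.
  by rewrite /uu /vv' !even_norm mulrDl.
rewrite geS; last 2 first.
- by move=> i; apply: measurable_funD; [exact: m_uu|exact: m_vv'].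
- by move=> i w; apply: addr_ge0; [exact: uu_ge0|exact: vv'_ge0].
rewrite -big_split /=; apply: eq_bigr => i _.
rewrite geD; [|exact: m_uu|exact: m_vv'|exact: uu_ge0|exact: vv'_ge0].
congr (_ + _)%E.
rewrite [LHS](eq_integral (fun w => (vv' i (ti i w))%:E)); last by move=> w _; rewrite vv_ti.
apply: (@shiftP (- ebase i) (fun w => (vv' i w)%:E)).
by apply/measurable_EFinP; exact: m_vv'.
Qed.

Section finite.
Variable r : R.
Hypothesis hI : (\int[P]_w (`|p0 w| ^+ n)%:E = r%:E)%E.

Lemma i_pw0 : P.-integrable setT (fun w => (`|p0 w| ^+ n)%:E).
Proof.
apply/integrableP; split; first by apply/measurable_EFinP; mfun.
rewrite (eq_integral (fun w => (`|p0 w| ^+ n)%:E)); first by rewrite hI ltry.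
by move=> w _ /=; rewrite ger0_norm // exprn_ge0.
Qed.

Lemma pwe_tau i w : `|pe i w| ^+ n = `|p0 (tau (ebase i) w)| ^+ n.
Proof. by rewrite pe_tau. Qed.

Lemma i_pwe i : P.-integrable setT (fun w => (`|pe i w| ^+ n)%:E).
Proof.
have := shiftI (ebase i) (fun w => `|p0 w| ^+ n) i_pw0.
by apply: eq_integrable => // w _; rewrite pwe_tau.
Qed.

Lemma ig_pwe i : (\int[P]_w (`|pe i w| ^+ n)%:E = r%:E)%E.
Proof.
under eq_integral do rewrite pwe_tau.
rewrite (@shiftP (ebase i) (fun w => (`|p0 w| ^+ n)%:E)) //.
by apply/measurable_EFinP; mfun.
Qed.

Lemma i_Lw : P.-integrable setT (fun w => (Lw w)%:E).
Proof. apply: intS => i; apply: intZ; apply: intD; [exact: i_pw0|exact: i_pwe]. Qed.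

Lemma ig_Lw : (\int[P]_w (Lw w)%:E = (d%:R * (n.+1%:R * (r + r)))%:E)%E.
Proof.
rewrite /Lw igS; last by move=> i; apply: intZ; apply: intD; [exact: i_pw0|exact: i_pwe].
rewrite (eq_bigr (fun _ => (n.+1%:R * (r + r))%:E)); last first.
  move=> i _; rewrite igZ; last by apply: intD; [exact: i_pw0|exact: i_pwe].
  by rewrite igD ?hI ?ig_pwe //; [exact: i_pw0|exact: i_pwe].
by rewrite sumEFin big_const_ord iter_addr addr0 [in RHS]mulr_natl.
Qed.

Lemma trunc_bound M : 0 < M -> (\int[P]_w (Wt M w)%:E <= (Cst * r)%:E)%E.
Proof.
move=> M0.
have pw w : Wt M w <= alpha^-1 * (4 * Hw M w + 2 * beta * Lw w).
  rewrite -(ler_pM2l halpha) mulrA mulfV ?gt_eqF // mul1r; exact: pw_total.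
apply: (@le_trans _ _ (\int[P]_w (alpha^-1 * (4 * Hw M w + 2 * beta * Lw w))%:E)%E).
  apply: ge0_le_integral => //.
  - by move=> w _; rewrite lee_fin Wt_ge0.
  - by apply/measurable_EFinP; exact: m_Wt.
  - apply/measurable_EFinP; apply: measurable_funM; first exact: measurable_cst.
    apply: measurable_funD; apply: measurable_funM; (try exact: measurable_cst); [exact: m_Hw|exact: m_Lw].
  - by move=> w _; rewrite lee_fin.
have iH := i_Hw M (ltW M0).
rewrite igZ; last by apply: intD; apply: intZ => //; exact: i_Lw.
rewrite igD; [|exact: intZ|by apply: intZ; exact: i_Lw].
rewrite !igZ //; last exact: i_Lw.
rewrite ig_Hw ?(ltW M0) // ig_Lw mule0 add0e -!EFinM lee_fin /Cst.
rewrite le_eqVlt; apply/orP; left; apply/eqP; ring.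
Qed.

Lemma Wlim_le : (\int[P]_w (Wlim w)%:E <= (Cst * r)%:E)%E.
Proof.
pose g := fun (N : nat) w => (Wt N.+1%:R w)%:E.
have eqlim w : limn (g^~ w) = (Wlim w)%:E by apply: cvg_lim => //; exact: Wt_cvg.
rewrite (eq_integral (fun w => limn (g^~ w))); last by move=> w _; rewrite eqlim.
rewrite (@monotone_convergence _ _ _ P setT measurableT g).
- apply: lime_le.
    apply: ereal_nondecreasing_is_cvgn => N1 N2 hN.
    apply: ge0_le_integral => //.
    + by move=> w _; rewrite lee_fin Wt_ge0.
    + by apply/measurable_EFinP; exact: m_Wt.
    + by apply/measurable_EFinP; exact: m_Wt.
    + by move=> w _; apply: Wt_nd.
  by apply: nearW => N; apply: trunc_bound.
- by move=> N; apply/measurable_EFinP; exact: m_Wt.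
- by move=> N w _; rewrite lee_fin Wt_ge0.
- by move=> w _; exact: Wt_nd.
Qed.

End finite.

Lemma final (hd : (0 < d)%N) :
  (\int[P]_w ((`|phi w 0| ^+ n
                 * (sqnorm_grad (phi w) 0 + sqnorm_grad_star (phi w) 0))%:E)
     <= (alpha^-1 * (2 * beta * (d%:R * (n.+1%:R * 2))))%:E
        * \int[P]_w ((`|phi w 0| ^+ n)%:E))%E.
Proof.
have C0 : 0 < alpha^-1 * (2 * beta * (d%:R * (n.+1%:R * 2))).
  apply: mulr_gt0; first by rewrite invr_gt0.
  apply: mulr_gt0; first by apply: mulr_gt0 => //; apply: lt_le_trans hab.
  by apply: mulr_gt0; rewrite ?ltr0n //; apply: mulr_gt0.
have I0 : (0 <= \int[P]_w ((`|phi w 0| ^+ n)%:E))%E.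
  by apply: integral_ge0 => w _; rewrite lee_fin exprn_ge0.
have [Ioo|Ifin] := eqVneq (\int[P]_w ((`|phi w 0| ^+ n)%:E))%E +oo%E.
  by rewrite Ioo gt0_muley ?lte_fin // leey.
have Ifn : (\int[P]_w ((`|phi w 0| ^+ n)%:E))%E \is a fin_num.
  by rewrite ge0_fin_numE // lt_neqAle Ifin leey.
set I := (\int[P]_w ((`|phi w 0| ^+ n)%:E))%E in I0 Ifin Ifn *.
rewrite -(fineK Ifn) -EFinM.
have hI : (\int[P]_w (`|p0 w| ^+ n)%:E = (fine I)%:E)%E by rewrite fineK.
rewrite LHS_eq; exact: (Wlim_le (fine I) hI).
Qed.

End main.

Theorem lemma2p7 (R : realType) (d : nat) (hd : (2 <= d)%N) (k : nat)
  (alpha beta : R) (halpha : 0 < alpha) (hab : alpha <= beta) :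
  let n := (2 * k.+1)%N in
  exists C : R, 0 < C /\
  forall (dsp : measure_display) (Omega : measurableType dsp)
    (P : probability Omega R) (a : Omega -> Zd d -> Zd d -> R)
    (xi : 'rV[R]_d) (T : R) (phi : Omega -> Zd d -> R),
    (forall w, conductivity alpha beta (a w)) ->
    iid_conductivity P a ->
    \sum_(i < d) (xi 0 i) ^+ 2 = 1 ->
    0 < T ->
    approx_corrector P a xi T phi ->
    (\int[P]_w ((`|phi w 0| ^+ n
                 * (sqnorm_grad (phi w) 0 + sqnorm_grad_star (phi w) 0))%:E)
     <= C%:E * \int[P]_w ((`|phi w 0| ^+ n)%:E))%E.
Proof.
move=> n; exists (alpha^-1 * (2 * beta * (d%:R * (n.+1%:R * 2)))); split.
  apply: mulr_gt0; first by rewrite invr_gt0.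
  apply: mulr_gt0; first by apply: mulr_gt0 => //; apply: lt_le_trans hab.
  apply: mulr_gt0; first by rewrite ltr0n; apply: leq_trans hd.
  by apply: mulr_gt0.
move=> dsp Omega P a xi T phi hcond hiid hxi hT
  [mphi [[tau [mtau [ptau [atau phitau]]]] [heq [iphi _]]]].
have ma : forall x i, measurable_fun setT (fun w => a w x (x + ebase i)).
  by move=> x i; exact: (hiid.1 (x, i)).
apply: (@final R d k alpha beta halpha hab dsp Omega P a xi T phi hcond ma hxi hT mphi tau mtau ptau atau phitau heq iphi).
by apply: leq_trans hd.
Qed.
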